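(* Let $\mathcal{D}[t]\subset\mathcal{H}\subset\mathcal{D}^\times[t^\times]$ be a rigged Hilbert space with $\mathcal{D}[t]$ complete and reflexive, and let $\{\xi_n\}\subset\mathcal{D}$ be a Riesz-Fischer-like sequence. Define the operator $V$ by $$D(V)=\Big\{\Phi\in\mathcal{D}^\times:\ \sum_{k=1}^\infty|\langle\Phi,\xi_k\rangle|^2<\infty\Big\},\qquad V\Phi=\{\langle\Phi,\xi_k\rangle\}_{k\in\mathbb{N}}.$$ Then $V:D(V)\to\ell^2$ is surjective.
   Context: A rigged Hilbert space $\mathcal{D}[t]\subset\mathcal{H}\subset\mathcal{D}^\times[t^\times]$: $\mathcal{D}$ is a dense subspace of the Hilbert space $\mathcal{H}$ with a locally convex topology $t$ finer than the norm topology, $\mathcal{D}^\times$ is the space of continuous conjugate-linear functionals on $\mathcal{D}[t]$ with the strong dual topology $t^\times$, $\mathcal{H}\subset\mathcal{D}^\times$, and the duality form $\langle\Phi,\eta\rangle$ (value of $\Phi\in\mathcal{D}^\times$ at $\eta\in\mathcal{D}$) extends the inner product. $\mathcal{L}(\mathcal{D},\mathcal{D}^\times)$ denotes the continuous linear maps $\mathcal{D}[t]\to\mathcal{D}^\times[t^\times]$; for $X$ in it, the adjoint $X^\dagger\in\mathcal{L}(\mathcal{D},\mathcal{D}^\times)$ is defined by $\langle X^\dagger\eta,\xi\rangle=\overline{\langle X\xi,\eta\rangle}$. $\mathcal{C}(\mathcal{D},\mathcal{H})$ is the set of $X\in\mathcal{L}(\mathcal{D},\mathcal{D}^\times)$ mapping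 $\mathcal{D}$ into $\mathcal{H}$ and continuous from $\mathcal{D}[t]$ into $\mathcal{H}$; for such $X$, $X^\dagger$ extends continuously to a map $\mathcal{H}\to\mathcal{D}^\times$. A sequence $\{\xi_n\}\subset\mathcal{D}$ is Riesz-Fischer-like if for every orthonormal basis $\{e_n\}$ of $\mathcal{H}$ there exists $S\in\mathcal{C}(\mathcal{D},\mathcal{H})$ with $S\xi_n=e_n$ for all $n$. *)

(* Defs.v *)
From mathcomp Require Import all_boot all_order all_algebra.
From mathcomp Require Import complex reals.
Import GRing.Theory Num.Theory.
Local Open Scope ring_scope.
Local Open Scope complex_scope.

Set Implicit Arguments. Unset Strict Implicit. Unset Printing Implicit Defensive.

Section RHS.
Variable R : realType.
Local Notation C := (R[i]).

Variable H : lmodType C.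

Definition is_inner_product (ip : H -> H -> C) : Prop :=
  [/\ (forall (a : C) (x y z : H), ip (a *: x + y) z = a * ip x z + ip y z),
      (forall x y : H, ip y x = (ip x y)^*),
      (forall x : H, 0 <= ip x x) &
      (forall x : H, ip x x = 0 -> x = 0)].

Definition hnorm (ip : H -> H -> C) (x : H) : C := sqrtC (ip x x).

Definition hilbert_complete (ip : H -> H -> C) : Prop :=
  forall x : nat -> H,
    (forall eps : C, 0 < eps -> exists N, forall m n, (N <= m)%N -> (N <= n)%N ->
        hnorm ip (x m - x n) < eps) ->
    exists l : H, forall eps : C, 0 < eps -> exists N, forall n, (N <= n)%N ->
        hnorm ip (x n - l) < eps.

Definition is_hilbert_space (ip : H -> H -> C) : Prop :=
  is_inner_product ip /\ hilbert_complete ip.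

Definition orthonormal_basis (ip : H -> H -> C) (e : nat -> H) : Prop :=
  (forall m n, ip (e m) (e n) = if m == n then 1 else 0) /\
  (forall h : H, (forall n, ip h (e n) = 0) -> h = 0).

(* The dense subspace D with a locally convex topology t, given by a   *)
(* family of seminorms p : I -> H -> C (only their values on D matter). *)
Definition is_subspace (D : H -> Prop) : Prop :=
  D 0 /\ forall (a : C) x y, D x -> D y -> D (a *: x + y).

Definition is_dense (ip : H -> H -> C) (D : H -> Prop) : Prop :=
  forall (h : H) (eps : C), 0 < eps -> exists d, D d /\ hnorm ip (h - d) < eps.

Definition seminorm_family (D : H -> Prop) (I : Type) (p : I -> H -> C) : Prop :=
  forall i : I,
    [/\ (forall x, D x -> 0 <= p i x),
        (forall x y, D x -> D y -> p i (x + y) <= p i x + p i y) &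
        (forall (a : C) x, D x -> p i (a *: x) = `|a| * p i x)].

(* x lies in the basic t-neighbourhood of x0 given by the finitely many
   seminorms p (F j), j < n, and the radius d *)
Definition t_small (I : Type) (p : I -> H -> C) (n : nat) (F : 'I_n -> I)
    (d : C) (x0 x : H) : Prop :=
  forall j : 'I_n, p (F j) (x - x0) < d.

Definition t_finer_than_norm (ip : H -> H -> C) (D : H -> Prop) (I : Type)
    (p : I -> H -> C) : Prop :=
  forall x0, D x0 -> forall eps : C, 0 < eps ->
    exists n (F : 'I_n -> I) (d : C), 0 < d /\
      forall x, D x -> t_small p F d x0 x -> hnorm ip (x - x0) < eps.

Definition lc_complete (D : H -> Prop) (I : Type) (p : I -> H -> C) : Prop :=
  forall (J : Type) (le : J -> J -> Prop) (x : J -> H),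
    (exists j : J, True) ->
    (forall j, le j j) -> (forall i j k, le i j -> le j k -> le i k) ->
    (forall i j, exists k, le i k /\ le j k) ->
    (forall j, D (x j)) ->
    (forall n (F : 'I_n -> I) (d : C), 0 < d -> exists j0, forall j k,
        le j0 j -> le j0 k -> t_small p F d (x j) (x k)) ->
    exists l, D l /\ forall n (F : 'I_n -> I) (d : C), 0 < d ->
        exists j0, forall j, le j0 j -> t_small p F d l (x j).

Definition t_bounded (D : H -> Prop) (I : Type) (p : I -> H -> C)
    (A : H -> Prop) : Prop :=
  (forall x, A x -> D x) /\ forall i : I, exists M : C, forall x, A x -> p i x <= M.

(* D^x : continuous conjugate-linear functionals on D[t]; a functional  *)
(* is represented by a function H -> C (only its values on D matter), *)
(* <Phi, eta> := Phi eta.                                              *)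
Definition in_Dx (D : H -> Prop) (I : Type) (p : I -> H -> C) (Phi : H -> C) : Prop :=
  (forall (a : C) x y, D x -> D y -> Phi (a *: x + y) = a^* * Phi x + Phi y) /\
  (forall x0, D x0 -> forall eps : C, 0 < eps ->
    exists n (F : 'I_n -> I) (d : C), 0 < d /\
      forall x, D x -> t_small p F d x0 x -> `|Phi x - Phi x0| < eps).

(* bounded subsets of D^x[t^x] (t^x = strong dual topology: uniform
   convergence on the bounded subsets of D[t]) *)
Definition Dx_bounded (D : H -> Prop) (I : Type) (p : I -> H -> C)
    (B : (H -> C) -> Prop) : Prop :=
  (forall Phi, B Phi -> in_Dx D p Phi) /\
  forall A, t_bounded D p A ->
    exists M : C, forall Phi eta, B Phi -> A eta -> `|Phi eta| <= M.

(* Phi lies in the basic t^x-neighbourhood of Phi0 given by the bounded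
   sets A j, j < n, and the radius d *)
Definition tx_small (n : nat) (A : 'I_n -> H -> Prop) (d : C)
    (Phi0 Phi : H -> C) : Prop :=
  forall (j : 'I_n) eta, A j eta -> `|Phi eta - Phi0 eta| < d.

Definition in_Dxx (D : H -> Prop) (I : Type) (p : I -> H -> C)
    (psi : (H -> C) -> C) : Prop :=
  (forall (a : C) Phi Psi, in_Dx D p Phi -> in_Dx D p Psi ->
      psi (fun x => a * Phi x + Psi x) = a^* * psi Phi + psi Psi) /\
  (forall Phi0, in_Dx D p Phi0 -> forall eps : C, 0 < eps ->
    exists n (A : 'I_n -> H -> Prop) (d : C),
      (forall j, t_bounded D p (A j)) /\ 0 < d /\
      forall Phi, in_Dx D p Phi -> tx_small A d Phi0 Phi -> `|psi Phi - psi Phi0| < eps).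

(* reflexivity of D[t]: the canonical map eta |-> (Phi |-> <Phi,eta>^* )
   from D[t] into the strong bidual D^xx is onto and a topological
   isomorphism, i.e. t coincides with the topology of uniform convergence
   on the bounded subsets of D^x[t^x]. *)
Definition lc_reflexive (D : H -> Prop) (I : Type) (p : I -> H -> C) : Prop :=
  [/\ (forall psi, in_Dxx D p psi ->
         exists eta, D eta /\ forall Phi, in_Dx D p Phi -> psi Phi = (Phi eta)^*),
      (* every t-neighbourhood contains a strong-bidual neighbourhood *)
      (forall eta0, D eta0 -> forall n (F : 'I_n -> I) (d : C), 0 < d ->
         exists m (B : 'I_m -> (H -> C) -> Prop) (d' : C),
           (forall j, Dx_bounded D p (B j)) /\ 0 < d' /\
           forall eta, D eta ->
             (forall (j : 'I_m) Phi, B j Phi -> `|Phi eta - Phi eta0| < d') ->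
             t_small p F d eta0 eta) &
      (* every strong-bidual neighbourhood contains a t-neighbourhood *)
      (forall eta0, D eta0 -> forall m (B : 'I_m -> (H -> C) -> Prop) (d' : C),
         (forall j, Dx_bounded D p (B j)) -> 0 < d' ->
         exists n (F : 'I_n -> I) (d : C), 0 < d /\
           forall eta, D eta -> t_small p F d eta0 eta ->
             forall (j : 'I_m) Phi, B j Phi -> `|Phi eta - Phi eta0| < d')].

Definition rigged_hilbert_space (ip : H -> H -> C) (D : H -> Prop) (I : Type)
    (p : I -> H -> C) : Prop :=
  [/\ is_hilbert_space ip, is_subspace D, is_dense ip D,
      seminorm_family D p & t_finer_than_norm ip D p].

Definition in_L (D : H -> Prop) (I : Type) (p : I -> H -> C) (X : H -> H -> C) : Prop :=
  [/\ (forall eta, D eta -> in_Dx D p (X eta)),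
      (forall (a : C) x y zeta, D x -> D y -> D zeta ->
         X (a *: x + y) zeta = a * X x zeta + X y zeta) &
      (forall eta0, D eta0 -> forall m (A : 'I_m -> H -> Prop) (eps : C),
         (forall j, t_bounded D p (A j)) -> 0 < eps ->
         exists n (F : 'I_n -> I) (d : C), 0 < d /\
           forall eta, D eta -> t_small p F d eta0 eta -> tx_small A eps (X eta0) (X eta))].

(* C(D, H): elements of L(D,D^x) mapping D into H, continuous D[t] -> H;
   X : H -> H is identified with eta |-> <X eta, .> (H ⊂ D^x) *)
Definition in_CDH (ip : H -> H -> C) (D : H -> Prop) (I : Type) (p : I -> H -> C)
    (X : H -> H) : Prop :=
  in_L D p (fun eta => ip (X eta)) /\
  (forall eta0, D eta0 -> forall eps : C, 0 < eps ->
    exists n (F : 'I_n -> I) (d : C), 0 < d /\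
      forall eta, D eta -> t_small p F d eta0 eta -> hnorm ip (X eta - X eta0) < eps).

Definition riesz_fischer_like (ip : H -> H -> C) (D : H -> Prop) (I : Type)
    (p : I -> H -> C) (xi : nat -> H) : Prop :=
  (forall n, D (xi n)) /\
  forall e : nat -> H, orthonormal_basis ip e ->
    exists S : H -> H, in_CDH ip D p S /\ forall n, S (xi n) = e n.

End RHS.

(* ell^2: square-summable complex sequences (nonnegative series with
   bounded partial sums) *)
Definition in_l2 (R : realType) (c : nat -> R[i]) : Prop :=
  exists M : R[i], forall N : nat, \sum_(k < N) `|c k| ^+ 2 <= M.

(* Main.v *)
Require Import Defs.
From mathcomp Require Import all_boot all_order all_algebra.
From mathcomp Require Import complex reals classical_sets boolp.
From mathcomp Require Import ring lra.
Import Order.TTheory GRing.Theory Num.Theory.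
Local Open Scope ring_scope.
Local Open Scope classical_set_scope.
Local Open Scope complex_scope.
Set Implicit Arguments. Unset Strict Implicit.

Lemma realc_ge0 (R : realType) (x : R[i]) : 0 <= x -> x = (complex.Re x)%:C.
Proof. case: x => a b; rewrite lecE /= => /andP[/eqP h _]. by rewrite h. Qed.

Lemma mono_cauchy (R : realType) (s : nat -> R[i]) (M : R[i]) :
  (forall n, 0 <= s n) ->
  (forall n, s n <= M) ->
  forall eps, 0 < eps -> exists N, forall m, (N <= m)%N -> s m - s N < eps.
Proof.
move=> s0 sM eps eps0.
have sE n : s n = (complex.Re (s n))%:C by apply: realc_ge0.
have epsE : eps = (complex.Re eps)%:C by apply: realc_ge0; apply: ltW.
have reps : 0 < complex.Re eps by move: eps0; rewrite {1}epsE ltcE /= => /andP[_].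
pose E := range (fun n => complex.Re (s n)).
have hs : has_sup E.
  split; first by exists (complex.Re (s 0%N)); exists 0%N.
  exists (complex.Re M) => _ [n _ <-].
  by move: (sM n); rewrite lecE => /andP[_].
have [_ [N _ <-] HN] := sup_adherent reps hs.
exists N => m Nm.
have Hm : complex.Re (s m) <= sup E by apply: sup_upper_bound => //; exists m.
rewrite epsE (sE m) (sE N) ltcE /=.
apply/andP; split; first by rewrite subrr.
lra.
Qed.

Section IP.
Variable R : realType.
Variable H : lmodType R[i].
Variable ip : H -> H -> R[i].
Hypothesis Hip : is_inner_product ip.

Lemma ipDl x y z : ip (x + y) z = ip x z + ip y z.
Proof. case: Hip => L _ _ _. by have := L 1 x y z; rewrite scale1r mul1r. Qed.

Lemma ip0l z : ip 0 z = 0.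
Proof. have := ipDl 0 0 z. rewrite addr0 => /eqP. rewrite -subr_eq0 opprD addrA subrr sub0r oppr_eq0 => /eqP. by []. Qed.

Lemma ipZl a x z : ip (a *: x) z = a * ip x z.
Proof. case: Hip => L _ _ _. by have := L a x 0 z; rewrite addr0 ip0l addr0. Qed.

Lemma ipC x y : ip y x = Num.conj (ip x y).
Proof. by case: Hip => _ C _ _; apply: C. Qed.

Lemma ipNl x z : ip (- x) z = - ip x z.
Proof. by rewrite -scaleN1r ipZl mulN1r. Qed.

Lemma ipBl x y z : ip (x - y) z = ip x z - ip y z.
Proof. by rewrite ipDl ipNl. Qed.

Lemma ipDr x y z : ip x (y + z) = ip x y + ip x z.
Proof. by rewrite (ipC (y+z)) ipDl rmorphD /= -(ipC y) -(ipC z). Qed.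

Lemma ipZr a x y : ip x (a *: y) = Num.conj a * ip x y.
Proof. by rewrite (ipC (a *: y)) ipZl rmorphM /= -(ipC y). Qed.

Lemma ipBr x y z : ip x (y - z) = ip x y - ip x z.
Proof. by rewrite -scaleN1r ipDr ipZr rmorphN1 mulN1r. Qed.

Lemma ip0r z : ip z 0 = 0.
Proof. by rewrite ipC ip0l conjC0. Qed.

Lemma ipxx_ge0 x : 0 <= ip x x.
Proof. by case: Hip => _ _ P _; apply: P. Qed.

Lemma ipxx_conj x : Num.conj (ip x x) = ip x x.
Proof. by apply: conj_Creal; apply: ger0_real; apply: ipxx_ge0. Qed.

Lemma ipxx_eq0 x : ip x x = 0 -> x = 0.
Proof. by case: Hip => _ _ _; apply. Qed.

Lemma CS_sq x y : `|ip x y| ^+ 2 <= ip x x * ip y y.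
Proof.
have [B0|Bn0] := eqVneq (ip y y) 0.
  by rewrite (@ipxx_eq0 y B0) !ip0r normr0 expr0n /= mulr0.
set A := ip x x; set B := ip y y; set z := ip x y.
have Bgt0 : 0 < B by rewrite lt0r Bn0 ipxx_ge0.
have := ipxx_ge0 (x - (z / B) *: y).
rewrite !ipBl !ipBr !ipZl !ipZr -/A -/B -/z.
have -> : ip y x = Num.conj z by rewrite ipC.
have -> : Num.conj (z / B) = Num.conj z / B by rewrite rmorphM /= fmorphV /= ipxx_conj.
rewrite normCK => H0.
have Bn : B != 0 by rewrite lt0r_neq0.
have E : A - Num.conj z / B * z - (z / B * Num.conj z - z / B * (Num.conj z / B * B)) = (A * B - z * Num.conj z) / B.
  by field.
rewrite E in H0.
have := mulr_ge0 H0 (ltW Bgt0).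
by rewrite divfK // subr_ge0.
Qed.

Lemma hnorm_ge0 x : 0 <= hnorm ip x.
Proof. by rewrite /hnorm sqrtC_ge0 ipxx_ge0. Qed.

Lemma hnorm_sq x : hnorm ip x ^+ 2 = ip x x.
Proof. by rewrite /hnorm sqrtCK. Qed.

Lemma CS x y : `|ip x y| <= hnorm ip x * hnorm ip y.
Proof.
rewrite -(ler_pXn2r (isT : (0 < 2)%N)) ?nnegrE ?normr_ge0 ?mulr_ge0 ?hnorm_ge0 //.
by rewrite exprMn !hnorm_sq CS_sq.
Qed.

Lemma hnormN x : hnorm ip (- x) = hnorm ip x.
Proof. by rewrite /hnorm ipNl ipC ipNl rmorphN opprK /= ipxx_conj. Qed.

Lemma orth_dense (D : H -> Prop) w : is_dense ip D ->
  (forall zeta, D zeta -> ip w zeta = 0) -> w = 0.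
Proof.
move=> Hd Hw; apply: ipxx_eq0.
have [//|nz] := eqVneq (ip w w) 0.
have npos : 0 < hnorm ip w.
  by rewrite /hnorm sqrtC_gt0 lt0r nz ipxx_ge0.
have [d [Dd Hwd]] := Hd w _ npos.
have E : ip w w = ip w (w - d) by rewrite ipBr (Hw _ Dd) subr0.
have : `|ip w w| < hnorm ip w * hnorm ip w.
  rewrite E; apply: (le_lt_trans (CS _ _)).
  by rewrite ltr_pM2l.
rewrite -expr2 hnorm_sq ger0_norm ?ipxx_ge0 //.
by rewrite ltxx.
Qed.

Section Sums.
Variable e : nat -> H.
Hypothesis He : forall m n, ip (e m) (e n) = if m == n then 1 else 0.
Variable c : nat -> R[i].

Definition coef n k : R[i] := if (n <= k)%N then c k else 0.
Definition g n m : H := \sum_(k < m) coef n k *: e k.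

Lemma g_e n m j : ip (g n m) (e j) = if (j < m)%N then coef n j else 0.
Proof.
elim: m => [|m IH]; first by rewrite /g big_ord0 ip0l.
rewrite /g big_ord_recr /= ipDl -/(g n m) IH ipZl He.
case: (ltngtP j m) => [jm|mj|->].
- by rewrite mulr0 addr0 (ltn_trans jm (ltnSn m)).
- by rewrite ltnNge mj /= mulr0 addr0.
- by rewrite mulr1 add0r ltnSn.
Qed.

Lemma g_g n m : ip (g n m) (g n m) = \sum_(k < m) `|coef n k| ^+ 2.
Proof.
elim: m => [|m IH]; first by rewrite /g !big_ord0 ip0l.
rewrite big_ord_recr /= -IH.
have -> : g n m.+1 = g n m + coef n m *: e m by rewrite /g big_ord_recr.
rewrite ipDl !ipDr !ipZl !ipZr g_e ltnn mulr0 addr0.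
rewrite (ipC (g n m) (e m)) g_e ltnn conjC0 mulr0 add0r He eqxx mulr1.
by rewrite normCK mulrC.
Qed.

Definition sq m : R[i] := \sum_(k < m) `|c k| ^+ 2.

Lemma coef_sum n m : (n <= m)%N -> \sum_(k < m) `|coef n k| ^+ 2 + sq n = sq m.
Proof.
elim: m => [|m IH].
  rewrite leqn0 => /eqP ->. by rewrite big_ord0 add0r.
rewrite leq_eqVlt => /orP[/eqP <-|]; last first.
  rewrite ltnS => nm. rewrite big_ord_recr /= -addrA addrC -addrA [sq n + _]addrC IH //.
  by rewrite /sq big_ord_recr /= /coef nm addrC.
rewrite big1 ?add0r // => k _.
by rewrite /coef leqNgt ltn_ord /= normr0 expr0n.
Qed.

Lemma g_diff n m : (n <= m)%N -> g 0 m - g 0 n = g n m.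
Proof.
elim: m => [|m IH].
  rewrite leqn0 => /eqP ->. by rewrite subrr /g big_ord0.
rewrite leq_eqVlt => /orP[/eqP <-|]; last first.
  rewrite ltnS => nm.
  have -> : g 0 m.+1 = g 0 m + coef 0 m *: e m by rewrite /g big_ord_recr.
  have -> : g n m.+1 = g n m + coef n m *: e m by rewrite /g big_ord_recr.
  by rewrite -IH // /coef nm leq0n addrAC.
rewrite subrr /g big1 // => k _.
by rewrite /coef leqNgt ltn_ord /= scale0r.
Qed.

End Sums.

Lemma small_eq0 (x : R[i]) : (forall eps : R[i], 0 < eps -> `|x| < eps) -> x = 0.
Proof.
move=> Hx; apply/eqP; apply: contraT => nz.
have := Hx `|x|; rewrite normr_gt0 nz => /(_ isT). by rewrite ltxx.
Qed.

Lemma exists_h (e : nat -> H) (c : nat -> R[i]) :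
  hilbert_complete ip ->
  (forall m n, ip (e m) (e n) = if m == n then 1 else 0) ->
  in_l2 c -> exists l, forall j, ip l (e j) = c j.
Proof.
move=> hc He [M HM].
have sq0 n : 0 <= sq c n by apply: sumr_ge0 => k _; apply: exprn_ge0.
have sqD n m : (n <= m)%N -> sq c m - sq c n = ip (g e c n m) (g e c n m).
  by move=> nm; rewrite (@g_g e He) -(@coef_sum c n m nm) addrK.
have sqmono n m : (n <= m)%N -> sq c n <= sq c m.
  move=> nm; rewrite -subr_ge0 sqD //; exact: ipxx_ge0.
have [l Hl] : exists l, forall eps : R[i], 0 < eps -> exists N, forall n, (N <= n)%N ->
        hnorm ip (g e c 0 n - l) < eps.
  apply: hc => eps eps0.
  have [N HN] := @mono_cauchy R (sq c) M sq0 HM _ (exprn_gt0 2 eps0).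
  have key n m : (N <= n)%N -> (n <= m)%N -> hnorm ip (g e c 0 m - g e c 0 n) < eps.
    move=> Nn nm.
    rewrite (@g_diff e c n m nm).
    rewrite -(ltr_pXn2r (isT : (0 < 2)%N)) ?nnegrE ?hnorm_ge0 ?(ltW eps0) //.
    rewrite hnorm_sq -sqD //.
    apply: (le_lt_trans _ (HN m (leq_trans Nn nm))).
    by rewrite lerD2l lerN2 sqmono.
  exists N => m n Nm Nn.
  case: (leqP n m) => nm; first exact: key.
  by rewrite -opprB hnormN; apply: key => //; apply: ltnW.
exists l => j.
apply/eqP; rewrite -subr_eq0; apply/eqP; apply: small_eq0 => eps eps0.
have [N HN] := Hl eps eps0.
pose n := maxn N j.+1.
have Hn := HN n (leq_maxl _ _).
have gj : ip (g e c 0 n) (e j) = c j.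
  by rewrite (@g_e e He) (leq_trans (leqnn j.+1) (leq_maxr _ _)) /coef leq0n.
have -> : ip l (e j) - c j = - ip (g e c 0 n - l) (e j) by rewrite ipBl gj opprB.
rewrite normrN; apply: (le_lt_trans (CS _ _)).
by rewrite /hnorm He eqxx sqrtC1 mulr1.
Qed.

End IP.

Theorem proposition2p15 (R : realType) (H : lmodType R[i]) (ip : H -> H -> R[i])
    (D : H -> Prop) (I : Type) (p : I -> H -> R[i]) (xi : nat -> H) :
  rigged_hilbert_space ip D p ->
  (exists e : nat -> H, orthonormal_basis ip e) ->
  lc_complete D p ->
  lc_reflexive D p ->
  riesz_fischer_like ip D p xi ->
  (* V : D(V) -> ell^2 is surjective *)
  forall c : nat -> R[i], in_l2 c ->
    exists Phi : H -> R[i],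
      [/\ in_Dx D p Phi, in_l2 (fun k => Phi (xi k)) & forall k, Phi (xi k) = c k].
Proof.
move=> [[Hip hc] Hsub Hdense Hsemi Hfiner] [e [He Hcomp]] _ _ [xiD RF] c Hl2.
have [S [[[_ HLlin _] HS] Sxi]] := RF e (conj He Hcomp).
have [h Hh] := exists_h Hip hc He Hl2.
have Slin a x y : D x -> D y -> S (a *: x + y) = a *: S x + S y.
  move=> Dx Dy; apply/eqP; rewrite -subr_eq0; apply/eqP.
  apply: (orth_dense Hip Hdense) => zeta Dz.
  by rewrite (ipBl Hip) (ipDl Hip) (ipZl Hip) (HLlin a x y zeta Dx Dy Dz) subrr.
have Phic k : ip h (S (xi k)) = c k by rewrite Sxi Hh.
exists (fun eta => ip h (S eta)); split => //; last first.
  case: Hl2 => M HM; exists M => N.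
  rewrite (eq_bigr (fun k : 'I_N => `|c k| ^+ 2)); first exact: HM.
  by move=> k _; rewrite Phic.
split.
  by move=> a x y Dx Dy; rewrite Slin // (ipDr Hip) (ipZr Hip).
move=> x0 Dx0 eps eps0.
set hh := hnorm ip h.
have hh0 : 0 <= hh by apply: hnorm_ge0.
have hh1 : 0 < hh + 1 by rewrite ltr_wpDl.
have eps'0 : 0 < eps / (hh + 1) by rewrite divr_gt0.
have [n [F [d [d0 Hd]]]] := HS x0 Dx0 _ eps'0.
exists n, F, d; split => // x Dx hs.
rewrite -(ipBr Hip); apply: (le_lt_trans (CS Hip _ _)).
apply: (le_lt_trans (ler_wpM2l hh0 (ltW (Hd x Dx hs)))).
rewrite mulrA ltr_pdivrMr // mulrDr mulr1 mulrC ltrDl //.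
Qed.
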